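(* Let $d\ge 1$ and for $n\in\mathbb{N}_0$ put $r_n=\binom{n+d-1}{n}$. Let $w$ be a nonnegative weight function with finite moments on a domain $\Omega\subset\mathbb{R}^d$, and let $(\mathbb{P}_n)_{n\ge0}$ be a family of vectors of polynomials $\mathbb{P}_n=(P_{n,1},\dots,P_{n,r_n})^T$ in $x=(x_1,\dots,x_d)$ forming a system of orthogonal polynomials with respect to $w$, i.e. the entries of $\mathbb{P}_n$ are polynomials of total degree $n$ which, together with all polynomials of degree $<n$, span the polynomials of degree $\le n$, and $$\int_\Omega \mathbb{P}_i(x)\mathbb{P}_j^T(x)w(x)\,dx=\mathbf 0_{r_i\times r_j}\ (i\neq j),\qquad \int_\Omega \mathbb{P}_j(x)\mathbb{P}_j^T(x)w(x)\,dx=\Pi_j^{-1},$$ with $\Pi_j$ an invertible $r_j\times r_j$ matrix. Suppose the three-term recurrence relations $$x_i\mathbb{P}_n(x)=A_{n,i}\mathbb{P}_{n+1}(x)+B_{n,i}\mathbb{P}_n(x)+C_{n,i}\mathbb{P}_{n-1}(x),\quad n\ge0,\ i=1,\dots,d,\ \mathbb{P}_{-1}=0,$$ hold, with $A_{n,i}$ of size $r_n\times r_{n+1}$, $B_{n,i}$ of size $r_n\times r_n$, $C_{n,i}$ of size $r_n\times r_{n-1}$. For $n\ge1$ let $C_n^T$ denote the $dr_{n-1}\times r_n$ matrix obtained by stacking $C_{n,1}^T,\dots,C_{n,d}^T$ vertically (i.e. $C_n^T=(C_{n,1}\ \cdots\ C_{n,d})^T$), and let $G_n=(G_{n,1}\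 \cdots\ G_{n,d})$, with each $G_{n,i}$ of size $r_n\times r_{n-1}$, be any generalized (left) inverse of $C_n^T$, i.e. $G_nC_n^T=\sum_{i=1}^d G_{n,i}C_{n,i}^T=I_{r_n}$. Then for every $n\ge1$, $$\Pi_n=\Pi_0\sum_{i_1,\dots,i_n\in\{1,\dots,d\}}G_{n,i_1}G_{n-1,i_2}\cdots G_{1,i_n}A_{0,i_n}A_{1,i_{n-1}}\cdots A_{n-1,i_1},$$ and this expression does not depend on the choice of the generalized inverses $G_1,\dots,G_n$.
   Context: Here $\Pi_0$ is a scalar since $r_0=1$. The joint matrix $C_n^T$ has full rank $r_n$, so left inverses exist. In the paper's setting the relations $\Pi_{n-1}A_{n-1,i}=C_{n,i}^T\Pi_n$ hold for all $n\ge1$ and $i=1,\dots,d$ (they follow from the orthogonality and the recurrence relations). *)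

(* Defs.v *)
From HB Require Import structures.
From mathcomp Require Import all_boot all_order all_algebra.
From mathcomp Require Import mpoly.
From mathcomp Require Import all_classical all_reals all_analysis.

Set Implicit Arguments.
Unset Strict Implicit.
Unset Printing Implicit Defensive.

Import Order.TTheory GRing.Theory Num.Theory.
Local Open Scope ring_scope.
Local Open Scope classical_set_scope.

(* r_n = binom(n+d-1, n): number of (linearly independent) orthogonal
   polynomials of exact total degree n in d variables. *)
Definition rdim (d n : nat) : nat := 'C(n + d - 1, n).

Lemma rdim0_gt0 d : (0 < rdim d 0)%N.
Proof. by rewrite /rdim bin0. Qed.

(* the unique index of the 1 x 1 matrices of level 0 *)
Definition ord_r0 (d : nat) : 'I_(rdim d 0) := Ordinal (rdim0_gt0 d).


(* Lebesgue measure on R^d, characterized by its value on closed boxes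
   (this determines it uniquely on the Borel sets) *)
Definition is_lebesgue_measure (R : realType) (d : nat)
  (lam : {measure set (d.-tuple R) -> \bar R}) : Prop :=
  forall a b : d.-tuple R,
    lam [set x | forall i : 'I_d, tnth a i <= tnth x i <= tnth b i] =
    (\prod_(i < d) Num.max 0 (tnth b i - tnth a i))%:E.

Definition peval (R : realType) (d : nat) (x : d.-tuple R) (p : {mpoly R[d]}) : R :=
  meval (fun i => tnth x i) p.

Definition mxint (R : realType) (d : nat) (lam : {measure set (d.-tuple R) -> \bar R})
  (D : set (d.-tuple R)) (m k : nat) (F : d.-tuple R -> 'M[R]_(m, k)) : 'M[R]_(m, k) :=
  \matrix_(i, j) Rintegral lam D (fun x => F x i j).

Definition Pvec (R : realType) (d : nat) (P : forall n, 'I_(rdim d n) -> {mpoly R[d]})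
  (n : nat) (x : d.-tuple R) : 'cV[R]_(rdim d n) :=
  \col_j peval x (P n j).

Definition Pvec_prev (R : realType) (d : nat) (P : forall n, 'I_(rdim d n) -> {mpoly R[d]})
  (n : nat) (x : d.-tuple R) : 'cV[R]_(rdim d n.-1) :=
  if n is n'.+1 then Pvec P n' x else 0.

(* G_{n,i_1} G_{n-1,i_2} ... G_{1,i_n}  for t = (i_1, ..., i_n) *)
Fixpoint Gchain (R : realType) (d : nat)
  (G : forall n, 'I_d -> 'M[R]_(rdim d n, rdim d n.-1)) (n : nat) :
  n.-tuple 'I_d -> 'M[R]_(rdim d n, rdim d 0) :=
  match n with
  | 0 => fun _ => 1%:M
  | n'.+1 => fun t => G n'.+1 (thead t) *m Gchain G (behead_tuple t)
  end.

(* A_{0,i_n} A_{1,i_{n-1}} ... A_{n-1,i_1}  for t = (i_1, ..., i_n) *)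
Fixpoint Achain (R : realType) (d : nat)
  (A : forall n, 'I_d -> 'M[R]_(rdim d n, rdim d n.+1)) (n : nat) :
  n.-tuple 'I_d -> 'M[R]_(rdim d 0, rdim d n) :=
  match n with
  | 0 => fun _ => 1%:M
  | n'.+1 => fun t => Achain A (behead_tuple t) *m A n' (thead t)
  end.

Definition GAsum (R : realType) (d : nat)
  (G : forall n, 'I_d -> 'M[R]_(rdim d n, rdim d n.-1))
  (A : forall n, 'I_d -> 'M[R]_(rdim d n, rdim d n.+1)) (n : nat) : 'M[R]_(rdim d n) :=
  \sum_(t : n.-tuple 'I_d) Gchain G t *m Achain A t.

Definition left_inverses (R : realType) (d : nat)
  (C G : forall n, 'I_d -> 'M[R]_(rdim d n, rdim d n.-1)) : Prop :=
  forall n : nat, (0 < n)%N -> \sum_(i < d) G n i *m (C n i)^T = 1%:M.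

(* Main.v *)
Require Import Defs.
From HB Require Import structures.
From mathcomp Require Import all_boot all_order all_algebra.
From mathcomp Require Import mpoly.
From mathcomp Require Import all_classical all_reals all_analysis.

Set Implicit Arguments.
Unset Strict Implicit.
Import Order.TTheory GRing.Theory Num.Theory.
Local Open Scope ring_scope.
Local Open Scope classical_set_scope.

Definition intg dd (T : measurableType dd) (R : realType) (mu : {measure set T -> \bar R})
  (D : set T) (f : T -> R) := mu.-integrable D (EFin \o f).

Lemma intg0 dd (T : measurableType dd) (R : realType) (mu : {measure set T -> \bar R})
  (D : set T) : measurable D -> intg mu D (fun _ => 0).
Proof. move=> mD; exact: integrable0. Qed.

Lemma intgD dd (T : measurableType dd) (R : realType) (mu : {measure set T -> \bar R})
  (D : set T) f g : measurable D -> intg mu D f -> intg mu D g -> intg mu D (fun x => f x + g x).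
Proof.
move=> mD hf hg; apply: (eq_integrable mD _ _ _ (integrableD mD hf hg)) => //= x _.
Qed.

Lemma intgZ dd (T : measurableType dd) (R : realType) (mu : {measure set T -> \bar R})
  (D : set T) (k : R) f : measurable D -> intg mu D f -> intg mu D (fun x => k * f x).
Proof.
move=> mD hf; apply: (eq_integrable mD _ _ _ (integrableZl mD k hf)) => //= x _.

Qed.

Lemma intg_sum dd (T : measurableType dd) (R : realType) (mu : {measure set T -> \bar R})
  (D : set T) I (s : seq I) (h : I -> T -> R) : measurable D ->
  (forall i, intg mu D (h i)) -> intg mu D (fun x => \sum_(i <- s) h i x).
Proof.
move=> mD hh; elim: s => [|i s ih].
  by under [fun x => _]funext do rewrite big_nil; exact: intg0.
under [fun x => _]funext do rewrite big_cons; exact: intgD.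
Qed.

Lemma Rint_sum dd (T : measurableType dd) (R : realType) (mu : {measure set T -> \bar R})
  (D : set T) I (s : seq I) (h : I -> T -> R) : measurable D ->
  (forall i, intg mu D (h i)) ->
  Rintegral mu D (fun x => \sum_(i <- s) h i x) = \sum_(i <- s) Rintegral mu D (h i).
Proof.
move=> mD hh; elim: s => [|i s ih].
  by under [fun x => _]funext do rewrite big_nil; rewrite big_nil Rintegral_cst // mul0r.
under [fun x => _]funext do rewrite big_cons.
rewrite big_cons RintegralD //; first by rewrite ih.
  exact: hh.
exact: intg_sum.
Qed.

Definition good dd (T : measurableType dd) (R : realType) (mu : {measure set T -> \bar R})
  (D : set T) m k (F : T -> 'M[R]_(m, k)) := forall i j, intg mu D (fun x => F x i j).

Definition mxI dd (T : measurableType dd) (R : realType) (mu : {measure set T -> \bar R})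
  (D : set T) m k (F : T -> 'M[R]_(m, k)) : 'M[R]_(m, k) :=
  \matrix_(i, j) Rintegral mu D (fun x => F x i j).

Section MX.
Context dd (T : measurableType dd) (R : realType) (mu : {measure set T -> \bar R})
  (D : set T) (mD : measurable D).

Lemma good_mull m k l (X : 'M[R]_(l, m)) (F : T -> 'M[R]_(m, k)) :
  good mu D F -> good mu D (fun x => X *m F x).
Proof.
move=> hF i j; under [fun x => _]funext do rewrite mxE.
apply: intg_sum => // a; exact: intgZ.
Qed.

Lemma mxI_mull m k l (X : 'M[R]_(l, m)) (F : T -> 'M[R]_(m, k)) :
  good mu D F -> mxI mu D (fun x => X *m F x) = X *m mxI mu D F.
Proof.
move=> hF; apply/matrixP => i j; rewrite /mxI !mxE.
under eq_Rintegral do rewrite ?mxE.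
rewrite Rint_sum //; last by move=> a; exact: intgZ.
apply: eq_bigr => a _; rewrite RintegralZl //.
  by congr (_ * _); rewrite mxE.
exact: hF.
Qed.

Lemma good_add m k (F G : T -> 'M[R]_(m, k)) :
  good mu D F -> good mu D G -> good mu D (fun x => F x + G x).
Proof.
move=> hF hG i j; under [fun x => _]funext do rewrite mxE.
exact: intgD.
Qed.

Lemma mxI_add m k (F G : T -> 'M[R]_(m, k)) :
  good mu D F -> good mu D G -> mxI mu D (fun x => F x + G x) = mxI mu D F + mxI mu D G.
Proof.
move=> hF hG; apply/matrixP => i j; rewrite /mxI !mxE.
under eq_Rintegral do rewrite ?mxE.
rewrite RintegralD //.
  exact: hF.
exact: hG.
Qed.

Lemma mxI_tr m k (F : T -> 'M[R]_(m, k)) :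
  mxI mu D (fun x => (F x)^T) = (mxI mu D F)^T.
Proof.
apply/matrixP => i j; rewrite /mxI !mxE.
by under eq_Rintegral do rewrite ?mxE.
Qed.

Lemma mxI0 m k : mxI mu D (fun _ => 0 : 'M[R]_(m, k)) = 0.
Proof.
apply/matrixP => i j; rewrite /mxI !mxE.
under eq_Rintegral do rewrite ?mxE.
by rewrite Rintegral_cst // mul0r.
Qed.

End MX.

Lemma peval_intg (d : nat) (R : realType)
  (lam : {measure set (d.-tuple R) -> \bar R})
  (Omega : set (d.-tuple R)) (mOmega : measurable Omega)
  (w : d.-tuple R -> R)
  (w_moments : forall m : 'I_d -> nat,
     lam.-integrable Omega
       (fun x => ((\prod_(i < d) tnth x i ^+ m i) * w x)%:E))
  (p : {mpoly R[d]}) : intg lam Omega (fun x => peval x p * w x).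
Proof.
under [fun x => _]funext do rewrite /peval mevalE big_distrl /=.
apply: intg_sum => // m.
under [fun x => _]funext do rewrite -mulrA.
apply: intgZ => //.
exact: (w_moments (fun i => m i)).
Qed.

Lemma behead_cons_tuple (T : Type) n (x : T) (t : n.-tuple T) :
  behead_tuple [tuple of x :: t] = t.
Proof. exact: val_inj. Qed.

Lemma sum_tuple_split (V : zmodType) (I : finType) n (F : n.+1.-tuple I -> V) :
  \sum_(t : n.+1.-tuple I) F t = \sum_(i : I) \sum_(t : n.-tuple I) F [tuple of i :: t].
Proof.
rewrite pair_big /=.
rewrite (reindex (fun p : I * n.-tuple I => [tuple of p.1 :: p.2])) //=.
exists (fun t : n.+1.-tuple I => (thead t, behead_tuple t)).
  by move=> [i t] _ /=; rewrite theadE behead_cons_tuple.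
by move=> t _ /=; rewrite [RHS]tuple_eta.
Qed.

Lemma idx_r0 d (i : 'I_(rdim d 0)) : i = ord_r0 d.
Proof.
apply: val_inj => /=; have : (val i < 1)%N by have := ltn_ord i; rewrite {2}/rdim bin0.
by rewrite ltnS leqn0 => /eqP ->.
Qed.

Lemma Gchain_cons (R : realType) d (G : forall n, 'I_d -> 'M[R]_(rdim d n, rdim d n.-1)) n (i : 'I_d) (t : n.-tuple 'I_d) :
  Gchain G [tuple of i :: t] = G n.+1 i *m Gchain G (n:=n) t.
Proof. by rewrite /= theadE behead_cons_tuple. Qed.

Lemma Achain_cons (R : realType) d (A : forall n, 'I_d -> 'M[R]_(rdim d n, rdim d n.+1)) n (i : 'I_d) (t : n.-tuple 'I_d) :
  Achain A [tuple of i :: t] = Achain A (n:=n) t *m A n i.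
Proof. by rewrite /= theadE behead_cons_tuple. Qed.

Lemma GAsumS (R : realType) d (G : forall n, 'I_d -> 'M[R]_(rdim d n, rdim d n.-1))
  (A : forall n, 'I_d -> 'M[R]_(rdim d n, rdim d n.+1)) n :
  GAsum G A n.+1 = \sum_i G n.+1 i *m GAsum G A n *m A n i.
Proof.
rewrite /GAsum sum_tuple_split; apply: eq_bigr => i _.
rewrite mulmx_sumr mulmx_suml; apply: eq_bigr => t _.
by rewrite Gchain_cons Achain_cons !mulmxA.
Qed.

Lemma GAsum0 (R : realType) d (G : forall n, 'I_d -> 'M[R]_(rdim d n, rdim d n.-1))
  (A : forall n, 'I_d -> 'M[R]_(rdim d n, rdim d n.+1)) :
  GAsum G A 0 = 1%:M.
Proof.
rewrite /GAsum (eq_bigr (fun _ => 1%:M)); last by move=> t _; rewrite /= mul1mx.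
by rewrite sumr_const card_tuple expn0.
Qed.

From mathcomp Require Import ring.

Theorem mainTheorem1 (d : nat) (hd : (0 < d)%N) (R : realType)
  (lam : {measure set (d.-tuple R) -> \bar R}) (Hlam : is_lebesgue_measure lam)
  (Omega : set (d.-tuple R)) (mOmega : measurable Omega)
  (w : d.-tuple R -> R) (w_ge0 : forall x, Omega x -> 0 <= w x)
  (w_moments : forall m : 'I_d -> nat,
     lam.-integrable Omega
       (fun x => ((\prod_(i < d) tnth x i ^+ m i) * w x)%:E))
  (P : forall n, 'I_(rdim d n) -> {mpoly R[d]})
  (P_deg : forall n j, msize (P n j) = n.+1)
  (P_span : forall n (q : {mpoly R[d]}), (msize q <= n.+1)%N ->
     exists (c : 'I_(rdim d n) -> R) (q0 : {mpoly R[d]}),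
       (msize q0 <= n)%N /\ q = \sum_(j < rdim d n) c j *: P n j + q0)
  (Pi : forall n, 'M[R]_(rdim d n))
  (Pi_unit : forall n, Pi n \in unitmx)
  (P_orth : forall i j, i <> j ->
     mxint lam Omega (fun x => w x *: (Pvec P i x *m (Pvec P j x)^T)) = 0)
  (P_norm : forall j,
     mxint lam Omega (fun x => w x *: (Pvec P j x *m (Pvec P j x)^T)) = invmx (Pi j))
  (A : forall n, 'I_d -> 'M[R]_(rdim d n, rdim d n.+1))
  (B : forall n, 'I_d -> 'M[R]_(rdim d n))
  (C : forall n, 'I_d -> 'M[R]_(rdim d n, rdim d n.-1))
  (ttrr : forall n (i : 'I_d) (x : d.-tuple R),
     tnth x i *: Pvec P n x =
       A n i *m Pvec P n.+1 x + B n i *m Pvec P n x + C n i *m Pvec_prev P n x) :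
  forall n : nat, (0 < n)%N ->
    (forall G, left_inverses C G ->
       Pi n = Pi 0 (ord_r0 d) (ord_r0 d) *: GAsum G A n) /\
    (forall G G', left_inverses C G -> left_inverses C G' ->
       GAsum G A n = GAsum G' A n).
Proof.
have mxintE : forall m k F, @mxint R d lam Omega m k F = mxI lam Omega F by [].
pose K a b := fun x => w x *: (Pvec P a x *m (Pvec P b x)^T).
pose L (i : 'I_d) a b := fun x => w x *: ((tnth x i *: Pvec P a x) *m (Pvec P b x)^T).
have gK : forall a b, good lam Omega (K a b).
  move=> a b r s.
  have -> : (fun x => K a b x r s) = (fun x => peval x (P a r * P b s) * w x).
    apply: funext => x; rewrite /K /peval mevalM !mxE big_ord1 !mxE; ring.
  exact: peval_intg.
have gL : forall i a b, good lam Omega (L i a b).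
  move=> i a b r s.
  have -> : (fun x => L i a b x r s) = (fun x => peval x (P a r * P b s * 'X_i) * w x).
    apply: funext => x; rewrite /L /peval !mevalM mevalXU !mxE big_ord1 !mxE; ring.
  exact: peval_intg.
pose Kp a b := fun x => w x *: (Pvec_prev P a x *m (Pvec P b x)^T).
have gKp : forall a b, good lam Omega (Kp a b).
  case=> [|a] b.
    move=> r s; rewrite /Kp /=.
    under [fun x => _]funext do rewrite mul0mx scaler0 mxE.
    exact: intg0.
  exact: gK.
have IKp : forall a, mxI lam Omega (Kp a a.+1) = 0.
  case=> [|a].
    rewrite /Kp /=.
    under [fun x => _]funext do rewrite mul0mx scaler0.
    exact: mxI0.
  by rewrite -mxintE P_orth //= => /eqP; rewrite eqn_leq ltnNge leqnSn andbF.
have symI : forall a, (invmx (Pi a))^T = invmx (Pi a).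
  move=> a; rewrite -P_norm mxintE -mxI_tr; congr mxI.
  apply: funext => x; apply/matrixP => r s; rewrite !mxE.
  by congr (_ * _); apply: eq_bigr => k _; rewrite !mxE mulrC.
have I3 : forall r s a b c (X : 'M[R]_(r, a)) (Y : 'M[R]_(r, b)) (Z : 'M[R]_(r, c))
    (F1 : _ -> 'M[R]_(a, s)) F2 F3,
    good lam Omega F1 -> good lam Omega F2 -> good lam Omega F3 ->
    mxI lam Omega (fun x => X *m F1 x + Y *m F2 x + Z *m F3 x) =
    X *m mxI lam Omega F1 + Y *m mxI lam Omega F2 + Z *m mxI lam Omega F3.
  move=> r s a b c X Y Z F1 F2 F3 h1 h2 h3.
  rewrite (mxI_add mOmega); last exact: good_mull.
    by rewrite (mxI_add mOmega) ?(mxI_mull mOmega) //; exact: good_mull.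
  by apply: good_add => //; exact: good_mull.
have eL : forall i a, L i a a.+1 = fun x => A a i *m K a.+1 a.+1 x + B a i *m K a a.+1 x + C a i *m Kp a a.+1 x.
  move=> i a; apply: funext => x.
  by rewrite /L /K /Kp ttrr !mulmxDl !scalerDr -!mulmxA !scalemxAr.
have eL' : forall i a, L i a.+1 a = fun x => A a.+1 i *m K a.+2 a x + B a.+1 i *m K a.+1 a x + C a.+1 i *m K a a x.
  move=> i a; apply: funext => x.
  by rewrite /L /K /Kp ttrr !mulmxDl !scalerDr -!mulmxA !scalemxAr.
have I1 : forall i a, mxI lam Omega (L i a a.+1) = A a i *m invmx (Pi a.+1).
  move=> i a; rewrite eL I3 // IKp -!mxintE P_norm P_orth; last by move/n_Sn.
  by rewrite !mulmx0 !addr0.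
have I2 : forall i a, mxI lam Omega (L i a.+1 a) = C a.+1 i *m invmx (Pi a).
  move=> i a; rewrite eL' I3 // -!mxintE P_norm !P_orth.
  - by rewrite !mulmx0 !add0r.
  - by move=> /esym /n_Sn.
  - by move=> h; have := ltnSn a.+1; rewrite -{1}h ltnNge leqnSn.
have tL : forall i a, (fun x => (L i a a.+1 x)^T) = L i a.+1 a.
  move=> i a; apply: funext => x; apply/matrixP => r s; rewrite /L !mxE.
  by congr (_ * _); apply: eq_bigr => k _; rewrite !mxE; ring.
have key : forall a i, Pi a *m A a i = (C a.+1 i)^T *m Pi a.+1.
  move=> a i.
  have h : A a i *m invmx (Pi a.+1) = invmx (Pi a) *m (C a.+1 i)^T.
    by rewrite -I1 -symI -trmx_mul -I2 -tL mxI_tr trmxK.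
  have := congr1 (fun M => Pi a *m M *m Pi a.+1) h.
  by rewrite /= !mulmxA mulmxKV // mulmxV // mul1mx.
set p0 := Pi 0 (ord_r0 d) (ord_r0 d).
have P0 : Pi 0 = p0 *: 1%:M.
  apply/matrixP => r s; rewrite !mxE (idx_r0 r) (idx_r0 s) eqxx mulr1 //.
have main : forall G, left_inverses C G -> forall n, Pi n = p0 *: GAsum G A n.
  move=> G hG; elim=> [|n IH]; first by rewrite GAsum0.
  have -> : Pi n.+1 = \sum_i G n.+1 i *m Pi n *m A n i.
    rewrite -[Pi n.+1]mul1mx -(hG n.+1 isT) mulmx_suml; apply: eq_bigr => i _.
    by rewrite -!mulmxA key.
  rewrite GAsumS scaler_sumr; apply: eq_bigr => i _.
  by rewrite IH -scalemxAr -scalemxAl.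
have p0nz : p0 != 0.
  apply/eqP => h; have := mulmxV (Pi_unit 0); rewrite P0 h scale0r mul0mx.
  move/matrixP => /(_ (ord_r0 d) (ord_r0 d)); rewrite !mxE eqxx /=.
  by move/eqP; rewrite eq_sym oner_eq0.
move=> n _; split; first by move=> G hG; exact: main.
move=> G G' hG hG'.
apply: (scalerI p0nz); by rewrite -!main.
Qed.
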